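(* In the monoid $\Pi_2=\langle a,b,c\mid (ab^ic)^2=1\ (i\geq 1)\rangle$, for every $i\geq 1$ the factorisation of the word $(ab^ic)^2$ into minimal invertible factors is $(ab^ic)(ab^ic)$; that is, $ab^ic$ is a minimal invertible word in $\Pi_2$.
   Context: A word $w$ over $\{a,b,c\}$ is invertible in a monoid $M$ if the element it represents is a unit (has both a left and a right inverse). A non-empty invertible word is minimal (a minimal invertible factor) if none of its non-empty proper prefixes is invertible in $M$ (equivalently, none of its non-empty proper suffixes is invertible). Every invertible word factors uniquely as a product of minimal invertible words. *)

(* Defs.v *)
From Stdlib Require Import List.
From mathcomp Require Import all_boot.
Set Implicit Arguments. Unset Strict Implicit. Unset Printing Implicit Defensive.

Inductive letter := La | Lb | Lc.

Definition word := seq letter.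

Definition abc (i : nat) : word := [:: La] ++ nseq i Lb ++ [:: Lc].

Definition Pi2_rel (l r : word) : Prop :=
  exists i, 1 <= i /\ l = abc i ++ abc i /\ r = [::].

Definition Pi2_step (u v : word) : Prop :=
  exists x y l r, Pi2_rel l r /\
    ((u = x ++ l ++ y /\ v = x ++ r ++ y) \/ (u = x ++ r ++ y /\ v = x ++ l ++ y)).

(* The monoid congruence generated by the relations: the reflexive-transitive
   closure of the (symmetric) one-step relation. Two words are equal in Pi_2
   iff they are related by Pi2_eq. *)
Inductive Pi2_eq : word -> word -> Prop :=
  | Pi2_refl u : Pi2_eq u u
  | Pi2_trans u v w : Pi2_step u v -> Pi2_eq v w -> Pi2_eq u w.

Definition invertible (w : word) : Prop :=
  (exists l : word, Pi2_eq (l ++ w) [::]) /\ (exists r : word, Pi2_eq (w ++ r) [::]).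

Definition minimal_invertible (w : word) : Prop :=
  w <> [::] /\ invertible w /\
  forall n, 0 < n -> n < size w -> ~ invertible (take n w).

Definition min_inv_factorisation (w : word) (fs : seq word) : Prop :=
  flatten fs = w /\ List.Forall minimal_invertible fs.

(* Main.v *)
Require Import Defs.
From mathcomp Require Import all_boot zify.

Definition fl (x : letter) (n : nat) : nat :=
  match x with La => n.+1 | Lb => n | Lc => n.-1 end.
Fixpoint ev (w : word) (n : nat) : nat :=
  match w with [::] => n | x :: w' => ev w' (fl x n) end.

Lemma ev_cat u v n : ev (u ++ v) n = ev v (ev u n).
Proof. by elim: u n => [|x u IH] n //=. Qed.

Lemma ev_nseqb k n : ev (nseq k Lb) n = n.
Proof. by elim: k => //. Qed.

Lemma ev_abc j n : ev (abc j) n = n.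
Proof. by rewrite /abc /= ev_cat ev_nseqb. Qed.

Lemma ev_inv u v : Pi2_eq u v -> forall n, ev u n = ev v n.
Proof.
elim=> [//|u' v' w [x [y [l [r [[j [_ [-> ->]]] H]]]]] _ IH] n; rewrite -IH;
case: H => [[-> ->]|[-> ->]]; rewrite ?ev_cat ?ev_abc //= ?ev_nseqb //=.
Qed.

Lemma noninv k : ~ invertible (La :: nseq k Lb).
Proof.
move=> [[l Hl] _].
have := @ev_inv _ _ Hl 0; rewrite ev_cat /= ev_nseqb /=.
by case: (ev l 0).
Qed.

Lemma abc_inv j : 1 <= j -> invertible (abc j).
Proof.
move=> hj; split; exists (abc j);
  apply: (@Pi2_trans _ [::]); try exact: Pi2_refl;
  exists [::], [::], (abc j ++ abc j), [::]; split;
  try (by exists j); left; by rewrite /= !cats0.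
Qed.

Lemma take_abc j m : 0 < m -> m < (j + 2) ->
  take m (abc j) = La :: nseq m.-1 Lb.
Proof.
case: m => // m _ hm; rewrite /abc /= take_cat size_nseq.
case: ltnP => h.
- by rewrite take_nseq // ltnW.
- have -> : m = j by lia.
  by rewrite subnn take0 cats0.
Qed.

Lemma size_abc j : size (abc j) = j + 2.
Proof. by rewrite /abc /= size_cat size_nseq /= addn1 addn2. Qed.

Lemma head_fact j f s t : 1 <= j -> minimal_invertible f ->
  f ++ s = abc j ++ t -> f = abc j /\ s = t.
Proof.
move=> hj [fne [finv fmin]] E.
have hm : 0 < size f by case: f fne {finv fmin E} => [|].
case: (ltngtP (size f) (j + 2)) => h.
- exfalso.
  have : take (size f) (f ++ s) = take (size f) (abc j ++ t) by rewrite E.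
  rewrite take_size_cat // take_cat size_abc h take_abc // => Ef.
  by apply: (@noninv (size f).-1); rewrite -Ef.
- exfalso.
  have : take (j + 2) (f ++ s) = take (j + 2) (abc j ++ t) by rewrite E.
  have R : take (j + 2) (abc j ++ t) = abc j by rewrite -size_abc take_size_cat.
  rewrite R take_cat h => Ef.
  apply: (fmin (j + 2)) => //; first by rewrite addn2.
  by rewrite Ef; apply: abc_inv.
- have Ef : f = abc j.
    have : take (j + 2) (f ++ s) = take (j + 2) (abc j ++ t) by rewrite E.
    by rewrite -{1}h take_size_cat // -size_abc take_size_cat.
  split => //; have := congr1 (drop (size (abc j))) E.
  by rewrite Ef !drop_size_cat.
Qed.

Theorem mainTheorem4 (i : nat) (hi : 1 <= i) :
  minimal_invertible (abc i) /\
  (forall fs : seq word,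
     min_inv_factorisation (abc i ++ abc i) fs <-> fs = [:: abc i; abc i]).
Proof.
have Mi : minimal_invertible (abc i).
  split; first by [].
  split; first exact: abc_inv.
  move=> n hn; rewrite size_abc => hn2; rewrite take_abc //; exact: noninv.
split => // fs; split.
- case=> Hfl HF.
  case: fs Hfl HF => [|f1 fs] /=.
    by rewrite /abc => E; discriminate E.
  move=> E HF; inversion HF as [|? ? H1 HF2]; subst.
  have [Ef1 E2] := @head_fact i _ _ _ hi H1 E; subst f1; clear E HF H1.
  case: fs E2 HF2 => [|f2 fs] /=.
    by rewrite /abc => E; discriminate E.
  move=> E2 HF2; inversion HF2 as [|? ? H2 HF3]; subst.
  have [Ef2 E3] := @head_fact i _ _ _ hi H2 (etrans E2 (esym (cats0 _))); subst f2; clear E2 HF2 H2.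
  case: fs E3 HF3 => [//|f3 fs] /= E3 HF3.
  inversion HF3 as [|? ? [ne _] _]; subst.
  by case: f3 ne E3 {HF3}.
- move=> ->; split; first by rewrite /= cats0.
  by constructor => //; constructor => //; constructor.
Qed.
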